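(* Consider a finite quiver with nodes $i=1,\dots,n$, each carrying an integer $N_i\ge 2$ and a non-negative integer $F_i$ (number of fundamental hypermultiplets), and with a finite multiset $E$ of edges, each edge $e$ joining two distinct nodes $s(e)\neq t(e)$ (bifundamental hypermultiplets; no loops/adjoints). For $\mathbf m=(m_{ia})_{1\le i\le n,\,1\le a\le N_i}\in\mathbb Z^{\sum_i N_i}$ define $$\Delta(\mathbf m)=\frac12\sum_{i=1}^n F_i\sum_{a=1}^{N_i}|m_{ia}|+\frac12\sum_{e\in E}\sum_{a=1}^{N_{s(e)}}\sum_{b=1}^{N_{t(e)}}|m_{s(e)a}-m_{t(e)b}|-\sum_{i=1}^n\sum_{1\le a<b\le N_i}|m_{ia}-m_{ib}|.$$ Assume that $\Delta(\mathbf m)\ge 1$ for every nonzero $\mathbf m$. Then every $\mathbf m$ with $\Delta(\mathbf m)=1$ has either all components $m_{ia}\ge 0$ or all components $m_{ia}\le 0$; moreover, for such $\mathbf m$ the traces $\sum_{a=1}^{N_i} m_{ia}$, $i=1,\dots,n$, are not all zero.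
   Context: This $\Delta(\mathbf m)$ is the monopole dimension of a 3d $\mathcal N=4$ gauge theory with gauge group $\prod_i U(N_i)$, fundamental and bifundamental hypermultiplets; the hypothesis $\Delta(\mathbf m)\ge 1$ for all $\mathbf m\neq 0$ is the paper's notion of a ''good'' theory. *)

(* Defs.v *)
From HB Require Import structures.
From mathcomp Require Import all_boot all_order all_algebra.
Set Implicit Arguments. Unset Strict Implicit. Unset Printing Implicit Defensive.
Import Order.TTheory GRing.Theory Num.Theory.
Local Open Scope ring_scope.

(* Quiver data: nodes 'I_n, ranks N i, fundamental flavours F i,
   edges E as a list (multiset) of ordered pairs (s(e), t(e)). *)
Definition charge (n : nat) (N : 'I_n -> nat) := forall i : 'I_n, 'I_(N i) -> int.

Definition Delta (n : nat) (N F : 'I_n -> nat) (E : seq ('I_n * 'I_n))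
  (m : charge N) : rat :=
  (1 / 2) * (\sum_(i < n) (F i)%:R * \sum_(a < N i) (`|m i a|)%:~R)
  + (1 / 2) * (\sum_(e <- E) \sum_(a < N e.1) \sum_(b < N e.2)
                 (`|m e.1 a - m e.2 b|)%:~R)
  - \sum_(i < n) \sum_(a < N i) \sum_(b < N i | (a < b)%N)
        (`|m i a - m i b|)%:~R.

(* Main.v *)
Require Import Defs.
From HB Require Import structures.
From mathcomp Require Import all_boot all_order all_algebra.
From mathcomp Require Import zify ring.
Import Order.TTheory GRing.Theory Num.Theory.
Local Open Scope ring_scope.

Lemma key (x y : int) :
  `|x - y| = `|Num.max x 0 - Num.max y 0| + `|Num.min x 0 - Num.min y 0|.
Proof. lia. Qed.

Lemma keyR (x y : int) :
  (`|x - y|)%:~R = (`|Num.max x 0 - Num.max y 0|)%:~R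
                 + (`|Num.min x 0 - Num.min y 0|)%:~R :> rat.
Proof. by rewrite key intrD. Qed.

Lemma keyR0 (x : int) :
  (`|x|)%:~R = (`|Num.max x 0|)%:~R + (`|Num.min x 0|)%:~R :> rat.
Proof. have := keyR x 0; rewrite !subr0 => ->; congr (_ + _); congr (_%:~R); lia. Qed.

Lemma Delta_split (n : nat) (N F : 'I_n -> nat) (E : seq ('I_n * 'I_n))
  (m : charge N) :
  Delta F E m = Delta F E (fun i a => Num.max (m i a) 0)
              + Delta F E (fun i a => Num.min (m i a) 0).
Proof.
have E1 : \sum_(i < n) (F i)%:R * \sum_(a < N i) (`|m i a|)%:~R =
  \sum_(i < n) (F i)%:R * \sum_(a < N i) (`|Num.max (m i a) 0|)%:~R
  + \sum_(i < n) (F i)%:R * \sum_(a < N i) (`|Num.min (m i a) 0|)%:~R :> rat.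
  rewrite -big_split; apply: eq_bigr => i _ /=; rewrite -mulrDr -big_split /=.
  by congr (_ * _); apply: eq_bigr => a _ /=; exact: keyR0.
have E2 : \sum_(e <- E) \sum_(a < N e.1) \sum_(b < N e.2) (`|m e.1 a - m e.2 b|)%:~R =
  \sum_(e <- E) \sum_(a < N e.1) \sum_(b < N e.2)
     (`|Num.max (m e.1 a) 0 - Num.max (m e.2 b) 0|)%:~R
  + \sum_(e <- E) \sum_(a < N e.1) \sum_(b < N e.2)
     (`|Num.min (m e.1 a) 0 - Num.min (m e.2 b) 0|)%:~R :> rat.
  rewrite -big_split; apply: eq_bigr => e _ /=; rewrite -big_split.
  apply: eq_bigr => a _ /=; rewrite -big_split.
  by apply: eq_bigr => b _ /=; exact: keyR.
have E3 : \sum_(i < n) \sum_(a < N i) \sum_(b < N i | (a < b)%N)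
        (`|m i a - m i b|)%:~R =
  \sum_(i < n) \sum_(a < N i) \sum_(b < N i | (a < b)%N)
        (`|Num.max (m i a) 0 - Num.max (m i b) 0|)%:~R
  + \sum_(i < n) \sum_(a < N i) \sum_(b < N i | (a < b)%N)
        (`|Num.min (m i a) 0 - Num.min (m i b) 0|)%:~R :> rat.
  rewrite -big_split; apply: eq_bigr => i _ /=; rewrite -big_split.
  apply: eq_bigr => a _ /=; rewrite -big_split.
  by apply: eq_bigr => b _ /=; exact: keyR.
rewrite /Delta E1 E2 E3 /=. ring.
Qed.

Theorem mainTheorem3 (n : nat) (N F : 'I_n -> nat) (E : seq ('I_n * 'I_n))
  (HN : forall i, (2 <= N i)%N)
  (HE : forall e, e \in E -> e.1 != e.2)
  (Hgood : forall m : charge N, (exists i a, m i a != 0) -> 1 <= Delta F E m) :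
  forall m : charge N, Delta F E m = 1 ->
    ((forall i a, 0 <= m i a) \/ (forall i a, m i a <= 0)) /\
    (exists i, \sum_(a < N i) m i a != 0).
Proof.
move=> m Hm.
have Hsign : (forall i a, 0 <= m i a) \/ (forall i a, m i a <= 0).
  case: (boolP [forall i, [forall a, 0 <= m i a]]) => [/forallP H|].
    by left => i a; have /forallP := H i; apply.
  rewrite negb_forall => /existsP [i]; rewrite negb_forall.
  move=> /existsP [a]; rewrite -ltNge => Hia.
  right => j b; rewrite leNgt; apply/negP => Hjb.
  have H1 : 1 <= Delta F E (fun i a => Num.max (m i a) 0).
    apply: Hgood; exists j, b => /=; lia.
  have H2 : 1 <= Delta F E (fun i a => Num.min (m i a) 0).
    apply: Hgood; exists i, a => /=; lia.
  move: Hm; rewrite Delta_split => Hm.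
  have : (2 : rat) <= 1 by rewrite -{2}Hm; have := lerD H1 H2.
  by [].
split => //.
case: (boolP [exists i, \sum_(a < N i) m i a != 0]) => [/existsP [i Hi]|H].
  by exists i.
exfalso.
have Hz : forall i a, m i a = 0.
  move=> i a.
  have Hs : \sum_(a < N i) m i a = 0.
    by apply/eqP; move: H; rewrite negb_exists => /forallP /(_ i); rewrite negbK.
  case: Hsign => Hs'.
    by move/eqP: Hs; rewrite psumr_eq0 => [/allP/(_ a (mem_index_enum _))/implyP/(_ isT)/eqP|j _].
  have : \sum_(a < N i) - m i a = 0 by rewrite sumrN Hs oppr0.
  move/eqP; rewrite psumr_eq0 => [/allP/(_ a (mem_index_enum _))/implyP/(_ isT)|j _].
    by rewrite oppr_eq0 => /eqP.
  by rewrite oppr_ge0.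
have : Delta F E m = 0.
  rewrite /Delta.
  rewrite big1 ?mulr0 ?add0r; last first.
    by move=> i _; rewrite big1 ?mulr0 // => a _; rewrite Hz.
  rewrite big1 ?mulr0 ?add0r; last first.
    by move=> e _; rewrite big1 // => a _; rewrite big1 // => b _; rewrite !Hz.
  rewrite big1 ?oppr0 //.
  by move=> i _; rewrite big1 // => a _; rewrite big1 // => b _; rewrite !Hz.
by rewrite Hm.
Qed.
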